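(* Let $\mathcal{D} = \langle S, A, T, s_0, \gamma, S_G\rangle$ be a goal-directed MDP with deterministic transitions (for instance a determinization $\delta(\mathcal{M})$) and $0<\gamma<1$. Let $s_i\in S\setminus S_G$ be a target state, and let $n<0<p$ be reals with $|n|\ge p$. Define the reward function $R^{s_i}: S\to\mathbb{R}$ by $R^{s_i}(s) = n$ if $s = s_i$, $R^{s_i}(s) = p$ if $s\in S_G$, and $R^{s_i}(s)=0$ otherwise, and let $V^*(s_0)$ be the optimal value at $s_0$ of the MDP $\langle S, A, T, s_0,\gamma, R^{s_i}\rangle$. Then $s_i$ is not a bottleneck state of $\mathcal{D}$ if and only if $V^*(s_0) > 0$.
   Context: A goal-directed MDP is a tuple $\langle S, A, T, s_0, \gamma, S_G\rangle$ with finite state set $S$, finite action set $A$, transition function $T: S\times A\times S\to[0,1]$ with $\sum_{s'}T(s,a,s')=1$, initial state $s_0$, discount $\gamma$, and absorbing goal set $S_G\subseteq S$. It has deterministic transitions if for every $s,a$ there is $s'$ with $T(s,a,s')=1$. A policy is a deterministic stationary map $\pi:S\to A$. A goal-reaching trace of $\pi$ from $s$ is a finite sequence $\langle x_0,\pi(x_0),x_1,\dots,x_k\rangle$ with $x_0=s$, $T(x_j,\pi(x_j),x_{j+1})>0$ for $j<k$, and $x_k\in S_G$. A state $b$ is a bottleneck state if for every policy $\pi$ and every goal-reaching trace $\langle x_0,\dots,x_k\rangle$ of $\pi$ from $s_0$, $b\in\{x_0,\dots,x_k\}$. Value convention: for a reward function $R:S\to\mathbb{R}$ and policy $\pi$,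 with state sequence $s_0=x_0,x_1,\dots$ generated by $\pi$, $V^\pi(s_0) = \mathbb{E}\big[\sum_{t=0}^{\tau}\gamma^t R(x_t)\big]$ where $\tau$ is the first time $x_t\in S_G$ (the episode terminates on entering $S_G$; if $S_G$ is never reached the sum runs over all $t\ge 0$), and $V^*(s_0)=\max_\pi V^\pi(s_0)$ over deterministic stationary policies. *)

(* Defs.v *)
From HB Require Import structures.
From mathcomp Require Import all_boot all_order all_algebra.
From mathcomp Require Import all_classical all_reals all_analysis.
Set Implicit Arguments. Unset Strict Implicit. Unset Printing Implicit Defensive.
Import Order.TTheory GRing.Theory Num.Theory.
Import numFieldNormedType.Exports.
Local Open Scope ring_scope.
Local Open Scope classical_set_scope.

Section MDP.
Variables (R : realType) (S A : finType).
Variable (T : S -> A -> S -> R).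
Variable (SG : {set S}).

Definition goal_trace (pi : {ffun S -> A}) (s : S) (xs : seq S) : Prop :=
  path (fun x y => 0 < T x (pi x) y) s xs /\ last s xs \in SG.

Definition bottleneck (s0 b : S) : Prop :=
  forall (pi : {ffun S -> A}) (xs : seq S),
    goal_trace pi s0 xs -> b \in s0 :: xs.

(* Truncated return  sum_{t=0}^{min(tau,N)} gamma^t Rw(x_t)
   of a state sequence x = x_0 ... x_N, where tau = first hitting time of SG. *)
Definition trunc_return (gamma : R) (Rw : S -> R) (s0 : S) (N : nat) (x : seq S) : R :=
  \sum_(t < N.+1)
     (if all (fun y => y \notin SG) (take t x)
      then gamma ^+ t * Rw (nth s0 x t) else 0).

Definition path_prob (pi : {ffun S -> A}) (s0 : S) (N : nat) (x : seq S) : R :=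
  (nth s0 x 0 == s0)%:R *
  \prod_(j < N) T (nth s0 x j) (pi (nth s0 x j)) (nth s0 x j.+1).

Definition Vtrunc (pi : {ffun S -> A}) (s0 : S) (gamma : R) (Rw : S -> R) (N : nat) : R :=
  \sum_(x : N.+1.-tuple S) path_prob pi s0 N x * trunc_return gamma Rw s0 N x.

(* V^pi(s0) = E[ sum_{t=0}^{tau} gamma^t Rw(x_t) ], as the limit of the
   expectations of the truncated returns. *)
Definition Vpi (pi : {ffun S -> A}) (s0 : S) (gamma : R) (Rw : S -> R) : R :=
  limn (Vtrunc pi s0 gamma Rw).

Definition Vstar (s0 : S) (gamma : R) (Rw : S -> R) : R :=
  sup (range (fun pi : {ffun S -> A} => Vpi pi s0 gamma Rw)).

End MDP.

Definition Rsi (R : realType) (S : finType) (SG : {set S}) (si : S) (n p : R) (s : S) : R :=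
  if s == si then n else if s \in SG then p else 0.

(* Main.v *)
Require Import Defs.
From HB Require Import structures.
From mathcomp Require Import all_boot all_order all_algebra.
From mathcomp Require Import all_classical all_reals all_analysis.
From mathcomp Require Import lra.
Import Order.TTheory GRing.Theory Num.Theory.
Import numFieldNormedType.Exports.
Local Open Scope ring_scope.

Lemma det_fun (R : realType) (S A : finType) (T : S -> A -> S -> R)
  (HT0 : forall s a s', 0 <= T s a s')
  (HT1 : forall s a, \sum_(s' : S) T s a s' = 1)
  (Hdet : forall s a, exists s', T s a s' = 1) :
  exists f : S -> A -> S, forall s a s', T s a s' = (s' == f s a)%:R.
Proof.
have H : forall s a, exists s', T s a s' == 1.
  by move=> s a; case: (Hdet s a) => s' h; exists s'; apply/eqP.
exists (fun s a => xchoose (H s a)) => s a s'.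
set g := xchoose _.
have Hg : T s a g = 1 by apply/eqP; exact: (xchooseP (H s a)).
case: eqP => [->//|ne].
have Hs := HT1 s a; rewrite (bigD1 g) //= Hg in Hs.
have H0 : \sum_(i | i != g) T s a i = 0.
  by apply: (addrI 1); rewrite addr0.
by rewrite (psumr_eq0P _ H0) //; apply/eqP.
Qed.

Definition Tf (R : realType) (S A : finType) (f : S -> A -> S) :=
  fun s a s' => ((s' == f s a)%:R : R).
Arguments Tf R {S A} f.

Definition traj (S A : finType) (f : S -> A -> S) (pi : {ffun S -> A}) (s0 : S) (t : nat) : S :=
  iter t (fun s => f s (pi s)) s0.
Arguments traj {S A} f pi s0 t.

Lemma Vtrunc_traj (R : realType) (S A : finType) (f : S -> A -> S) (pi : {ffun S -> A})
  (s0 : S) (SG : {set S}) (gamma : R) (Rw : S -> R) (N : nat) :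
  Vtrunc (Tf R f) SG pi s0 gamma Rw N =
  \sum_(t < N.+1) (if all (fun y => y \notin SG) (map (traj f pi s0) (iota 0 t))
                   then gamma ^+ t * Rw (traj f pi s0 t) else 0).
Proof.
set tr := traj f pi s0.
have [x0 Hx0] : exists x0 : N.+1.-tuple S, tval x0 = map tr (iota 0 N.+1).
  have Hs : size (map tr (iota 0 N.+1)) == N.+1 by rewrite size_map size_iota.
  by exists (Tuple Hs).
have Hn : forall j, (j < N.+1)%N -> nth s0 x0 j = tr j.
  by move=> j Hj; rewrite Hx0 (nth_map 0) ?size_iota // nth_iota.
have Pp : forall x : N.+1.-tuple S, path_prob (Tf R f) pi s0 N x = (x == x0)%:R.
  move=> x; case: eqP => [->|ne].
    rewrite /path_prob Hn // eqxx mul1r big1 // => j _.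
    by rewrite /Tf !Hn ?ltnS ?(ltnW (ltn_ord j)) // eqxx.
  case: (boolP (path_prob (Tf R f) pi s0 N x == 0)) => [/eqP -> //|Hne].
  exfalso; apply: ne.
  rewrite /path_prob mulf_eq0 negb_or in Hne; case/andP: Hne => H1 /prodf_neq0 H2.
  rewrite pnatr_eq0 eqb0 negbK in H1.
  apply: val_inj => /=; apply: (@eq_from_nth _ s0); first by rewrite !size_tuple.
  move=> j; rewrite size_tuple => Hj; rewrite Hn //.
  elim: j Hj => [|j IH] Hj; first exact/eqP.
  have Hj' : (j < N)%N by [].
  have := H2 (Ordinal Hj') isT; rewrite /Tf /= pnatr_eq0 eqb0 negbK => /eqP ->.
  by rewrite IH // ltnW.
rewrite /Vtrunc (bigD1 x0) //= Pp eqxx mul1r big1 ?addr0; last first.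
  by move=> x /negbTE Hx; rewrite Pp Hx mul0r.
rewrite /trunc_return; apply: eq_bigr => t _.
rewrite Hn // Hx0 -map_take take_iota.
by rewrite (minn_idPl (ltnW (ltn_ord t))).
Qed.

Lemma Vpi_goal (R : realType) (S A : finType) (f : S -> A -> S) (pi : {ffun S -> A})
  (s0 : S) (SG : {set S}) (gamma : R) (Rw : S -> R) (tau : nat)
  (Htau : traj f pi s0 tau \in SG)
  (Hbef : forall t, (t < tau)%N -> traj f pi s0 t \notin SG) :
  Vpi (Tf R f) SG pi s0 gamma Rw = \sum_(t < tau.+1) gamma ^+ t * Rw (traj f pi s0 t).
Proof.
set tr := traj f pi s0.
have Hu : forall t, all (fun y => y \notin SG) (map tr (iota 0 t)) = (t <= tau)%N.
  move=> t; case: leqP => Ht.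
    apply/allP => y /mapP [k]; rewrite mem_iota => /andP[_ Hk] ->.
    by apply: Hbef; apply: leq_trans Hk Ht.
  apply/negbTE/allPn; exists (tr tau); first by apply: map_f; rewrite mem_iota.
  by rewrite negbK.
rewrite /Vpi; apply: norm_lim_near_cst.
near=> N.
have HN : (tau <= N)%N by near: N; exists tau.
rewrite Vtrunc_traj.
rewrite -(big_mkord xpredT (fun t => if all (fun y => y \notin SG) (map tr (iota 0 t))
                   then gamma ^+ t * Rw (tr t) else 0)).
rewrite (big_cat_nat (n := tau.+1)) //= [X in _ + X]big1_seq ?addr0; last first.
  move=> t /andP[_]; rewrite mem_index_iota => /andP[Ht _].
  by rewrite Hu leqNgt Ht.
rewrite big_mkord; apply: eq_bigr => t _.
by rewrite Hu -ltnS ltn_ord.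
Unshelve. all: by end_near.
Qed.

Lemma Vpi_nogoal (R : realType) (S A : finType) (f : S -> A -> S) (pi : {ffun S -> A})
  (s0 : S) (SG : {set S}) (gamma : R) (Rw : S -> R) (m : R)
  (Hg : 0 < gamma < 1)
  (Hng : forall t, traj f pi s0 t \notin SG)
  (Hrw : forall t, m <= Rw (traj f pi s0 t) <= 0) :
  Vpi (Tf R f) SG pi s0 gamma Rw <= 0.
Proof.
set tr := traj f pi s0.
set u := Vtrunc (Tf R f) SG pi s0 gamma Rw.
have Hu : forall t, all (fun y => y \notin SG) (map tr (iota 0 t)).
  by move=> t; apply/allP => y /mapP [k _] ->; apply: Hng.
have Eu : forall N, u N = \sum_(t < N.+1) gamma ^+ t * Rw (tr t).
  by move=> N; rewrite /u Vtrunc_traj; apply: eq_bigr => t _; rewrite Hu.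
case/andP: Hg => g0 g1.
have Hdec : {homo u : a b / (a <= b)%N >-> b <= a}.
  move=> a b /subnK <-; elim: (b - a)%N => [|k IH] //=.
  apply: le_trans IH; rewrite addSn !Eu [leLHS]big_ord_recr /= gerDl.
  apply: mulr_ge0_le0; first by rewrite exprn_ge0 // ltW.
  by case/andP: (Hrw (k + a).+1).
have Hlb : has_lbound (range u).
  exists (m / (1 - gamma)) => y [N _ <-]; rewrite Eu.
  have m0 : m <= 0 by case/andP: (Hrw 0%N) => h1 h2; apply: le_trans h2.
  have ng : `|gamma| < 1 by rewrite ger0_norm // ltW.
  have Hgeo := geometric_le_lim N.+1 (@ler01 R) g0 ng.
  rewrite seriesEord /= in Hgeo.
  apply: (@le_trans _ _ (m * \sum_(t < N.+1) gamma ^+ t)).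
    have E : m / (1 - gamma) = m * (1 / (1 - gamma)) by rewrite mul1r.
    rewrite E; apply: ler_wnM2l => //; apply: le_trans Hgeo.
    by rewrite le_eqVlt; apply/orP; left; apply/eqP/eq_bigr => t _; rewrite mul1r.
  rewrite mulr_sumr; apply: ler_sum => t _.
  rewrite mulrC; apply: ler_wpM2l; first by rewrite exprn_ge0 // ltW.
  by case/andP: (Hrw t).
have Hc := nonincreasing_is_cvgn Hdec Hlb.
apply: le_trans (nonincreasing_cvgn_ge Hdec Hc 0) _.
rewrite Eu big_ord1 expr0 mul1r.
by case/andP: (Hrw 0%N).
Qed.

Lemma path_traj (R : realType) (S A : finType) (f : S -> A -> S) (pi : {ffun S -> A})
  (s0 : S) (m : nat) (xs : seq S) :
  path (fun x y => 0 < Tf R f x (pi x) y) (traj f pi s0 m) xs ->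
  xs = map (traj f pi s0) (iota m.+1 (size xs)).
Proof.
elim: xs m => [|y xs IH] m //= /andP [Hy Hp].
rewrite /Tf ltr0n lt0b in Hy.
have Ey : y = traj f pi s0 m.+1 by rewrite (eqP Hy).
rewrite Ey in Hp *; congr cons; exact: IH.
Qed.

Lemma traj_path (R : realType) (S A : finType) (f : S -> A -> S) (pi : {ffun S -> A})
  (s0 : S) (m k : nat) :
  path (fun x y => 0 < Tf R f x (pi x) y) (traj f pi s0 m)
    (map (traj f pi s0) (iota m.+1 k)).
Proof.
elim: k m => [|k IH] m //=.
apply/andP; split; last exact: IH.
by rewrite /Tf eqxx ltr01.
Qed.

Lemma last_traj (S A : finType) (f : S -> A -> S) (pi : {ffun S -> A})
  (s0 : S) (m k : nat) :
  last (traj f pi s0 m) (map (traj f pi s0) (iota m.+1 k)) = traj f pi s0 (m + k).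
Proof.
elim: k m => [|k IH] m /=; first by rewrite addn0.
by rewrite -addSnnS -IH.
Qed.

Lemma Vstar_pos (R : realType) (S A : finType) (V : {ffun S -> A} -> R) :
  (exists pi, 0 < V pi) -> 0 < sup (range V).
Proof.
case=> pi Hpi; apply: lt_le_trans Hpi _.
have Hs : has_sup (range V).
  split; first by exists (V pi); exists pi.
  exists (\sum_q `|V q|) => y [q _ <-].
  apply: le_trans (ler_norm _) _.
  rewrite (bigD1 q) //= lerDl; exact: sumr_ge0.
by apply: (sup_upper_bound Hs); exists pi.
Qed.

Lemma Vstar_le0 (R : realType) (S A : finType) (V : {ffun S -> A} -> R) :
  (forall pi, V pi <= 0) -> sup (range V) <= 0.
Proof.
move=> H.
have [ne|e0] := pselect (range V !=set0)%classic.
  by apply: (ge_sup ne) => y [q _ <-]; apply: H.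
have -> : range V = set0%classic.
  apply/seteqP; split => y // [q _ Hq]; apply: e0; exists y; by exists q.
by rewrite sup0.
Qed.

Theorem proposition3 (R : realType) (S A : finType) (T : S -> A -> S -> R)
  (s0 : S) (gamma : R) (SG : {set S})
  (HT0 : forall s a s', 0 <= T s a s')
  (HT1 : forall s a, \sum_(s' : S) T s a s' = 1)
  (Hdet : forall s a, exists s', T s a s' = 1)
  (Habs : forall s a, s \in SG -> T s a s = 1)
  (Hgamma : 0 < gamma < 1)
  (si : S) (Hsi : si \notin SG) (n p : R)
  (Hn : n < 0) (Hp : 0 < p) (Hnp : p <= `|n|) :
  ~ bottleneck T SG s0 si <-> 0 < Vstar T SG s0 gamma (Rsi SG si n p).
Proof.
have [f Hf] := det_fun _ _ _ _ HT0 HT1 Hdet.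
have ET : T = Tf R f.
  by apply: funext => s; apply: funext => a; apply: funext => s'; rewrite Hf.
rewrite ET; clear HT0 HT1 Hdet Habs Hf ET T.
have [g0 g1] := andP Hgamma.
set Rw := Rsi SG si n p.
have Rw_le0 : forall s, s \notin SG -> Rw s <= 0.
  by move=> s Hs; rewrite /Rw /Rsi (negbTE Hs); case: ifP => _ //; rewrite ltW.
have Rw_ge : forall s, s \notin SG -> n <= Rw s.
  by move=> s Hs; rewrite /Rw /Rsi (negbTE Hs); case: ifP => _ //; rewrite ltW.
have RwG : forall s, s \in SG -> Rw s = p.
  move=> s Hs; rewrite /Rw /Rsi Hs; case: eqP => // E.
  by move: Hsi; rewrite -E Hs.
split.
- move=> Hnb.
  have [pi [xs [Htr Hnot]]] : exists pi xs,
      goal_trace (Tf R f) SG pi s0 xs /\ si \notin s0 :: xs.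
    apply: contrapT => Hne; apply: Hnb => pi xs Htr.
    apply: contrapT => Hn'; apply: Hne; exists pi, xs; split => //; exact/negP.
  apply: Vstar_pos; exists pi.
  case: Htr => Hpath Hlast.
  set tr := traj f pi s0.
  have Hxs : xs = map tr (iota 1 (size xs)) := @path_traj R S A f pi s0 0 xs Hpath.
  set k := size xs in Hxs.
  have Hk : tr k \in SG.
    by move: Hlast; rewrite Hxs (@last_traj S A f pi s0 0 k).
  have Hall : forall t, (t <= k)%N -> tr t != si.
    move=> t Ht; apply/eqP => E; move: Hnot; rewrite Hxs -E.
    have -> : s0 :: map tr (iota 1 k) = map tr (iota 0 k.+1) by [].
    by rewrite map_f // mem_iota.
  case: (ex_minnP (ex_intro (fun t => tr t \in SG) k Hk)) => tau Htau Hmin.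
  have Hbef : forall t, (t < tau)%N -> tr t \notin SG.
    by move=> t Ht; apply/negP => /Hmin; rewrite leqNgt Ht.
  rewrite (@Vpi_goal R S A f pi s0 SG gamma Rw tau Htau Hbef) big_ord_recr /= big1 ?add0r.
    by rewrite RwG // mulr_gt0 // exprn_gt0.
  move=> t _; rewrite /Rw /Rsi.
  rewrite (negbTE (Hall t _)); last by apply: leq_trans (ltnW (ltn_ord t)) (Hmin _ Hk).
  by rewrite (negbTE (Hbef t (ltn_ord t))) mulr0.
- move=> H0 Hb.
  suff : Vstar (Tf R f) SG s0 gamma Rw <= 0 by rewrite leNgt H0.
  apply: Vstar_le0 => pi.
  set tr := traj f pi s0.
  have [[k Hk]|Hng] := pselect (exists t, tr t \in SG); last first.
    apply: (@Vpi_nogoal R S A f pi s0 SG gamma Rw n) => // t.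
      by apply/negP => Ht; apply: Hng; exists t.
    have Ht : tr t \notin SG by apply/negP => Ht; apply: Hng; exists t.
    by rewrite Rw_ge // Rw_le0.
  case: (ex_minnP (ex_intro (fun t => tr t \in SG) k Hk)) => tau Htau Hmin.
  have Hbef : forall t, (t < tau)%N -> tr t \notin SG.
    by move=> t Ht; apply/negP => /Hmin; rewrite leqNgt Ht.
  have Htr : goal_trace (Tf R f) SG pi s0 (map tr (iota 1 tau)).
    split; first exact: (@traj_path R S A f pi s0 0 tau).
    by rewrite (@last_traj S A f pi s0 0 tau).
  have := Hb pi _ Htr.
  have -> : s0 :: map tr (iota 1 tau) = map tr (iota 0 tau.+1) by [].
  case/mapP => t0; rewrite mem_iota add0n => /andP[_ Ht0] Esi.
  have Ht0' : (t0 < tau)%N.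
    rewrite ltn_neqAle -ltnS Ht0 andbT; apply/eqP => E.
    by move: Hsi; rewrite Esi E Htau.
  rewrite (@Vpi_goal R S A f pi s0 SG gamma Rw tau Htau Hbef) big_ord_recr /= RwG //.
  have E1 : Rw (tr t0) = n by rewrite /Rw /Rsi -Esi eqxx.
  rewrite (bigD1 (Ordinal Ht0')) //= E1.
  have Hrest : \sum_(i < tau | i != Ordinal Ht0') gamma ^+ i * Rw (tr i) <= 0.
    apply: sumr_le0 => i _; apply: mulr_ge0_le0; first by rewrite exprn_ge0 // ltW.
    exact: Rw_le0 (Hbef _ (ltn_ord i)).
  have Hpow : gamma ^+ tau <= gamma ^+ t0.
    rewrite -(subnKC (ltnW Ht0')) exprD ler_piMr ?exprn_ge0 ?ltW //.
    by rewrite exprn_ilt1 ?ltW // subn_eq0 -ltnNge.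
  have Hn' : `|n| = - n by rewrite ltr0_norm.
  have Hgt0 : 0 <= gamma ^+ t0 by rewrite exprn_ge0 // ltW.
  have : gamma ^+ tau * p <= gamma ^+ t0 * p by rewrite ler_wpM2r // ltW.
  have : gamma ^+ t0 * (n + p) <= 0 by apply: mulr_ge0_le0 => //; lra.
  lra.
Qed.
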